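(* Let $\ell \ge 1$, $L = 2^\ell$, and let $s$ be an integer with $0 \le s < \ell$. Let $a \in \mathbb{Z}_L$ and let $\langle a\rangle_0, \langle a\rangle_1 \in \mathbb{Z}_L$ satisfy $\langle a\rangle_0 + \langle a\rangle_1 = a$ in $\mathbb{Z}_L$. Let $a_u, a_0, a_1 \in \{0,1,\ldots,2^\ell-1\}$ be the unsigned representatives of $a, \langle a\rangle_0, \langle a\rangle_1$, and write $a_0 = a_0^1\cdot 2^s + a_0^0$, $a_1 = a_1^1 \cdot 2^s + a_1^0$ with $a_0^1,a_0^0,a_1^1,a_1^0\in\mathbb{Z}$ and $0 \le a_0^0, a_1^0 < 2^s$. With $n' = 2^{\ell-1}$, define $$\mathsf{corr} = \begin{cases} -1 & \text{if } (a_u \ge n') \wedge (a_0 < n') \wedge (a_1 < n'),\\ 1 & \text{if } (a_u < n') \wedge (a_0 \ge n') \wedge (a_1 \ge n'),\\ 0 & \text{otherwise.}\end{cases}$$ Then $$(\langle a\rangle_0 \gg s) + (\langle a\rangle_1 \gg s) + \mathsf{corr}\cdot 2^{\ell-s} + \mathbf{1}\{a_0^0 + a_1^0 \ge 2^s\} \equiv (a \gg s) \pmod{L}.$$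
   Context: $\mathbf{1}\{P\}$ is the indicator of $P$. For $x \in \mathbb{Z}_L$ with unsigned representative $x_u \in\{0,\ldots,2^\ell-1\}$, $x \gg s$ denotes the arithmetic right shift by $s$, i.e. $\lfloor (x_u - \mathbf{1}\{x_u \ge 2^{\ell-1}\}\cdot 2^\ell)/2^s \rfloor \bmod 2^\ell$ (floor division of the two's-complement signed value of $x$ by $2^s$, reduced mod $2^\ell$). The sum in the conclusion is taken in $\mathbb{Z}_L$. *)

(* Defs.v *)
From mathcomp Require Import all_boot all_order all_algebra.
Set Implicit Arguments. Unset Strict Implicit. Unset Printing Implicit Defensive.
Import Order.TTheory GRing.Theory Num.Theory.
Local Open Scope ring_scope.

(* Z_L with L = 2^l is 'Z_(2^l) (a genuine ring since l >= 1 gives 2^l >= 2).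
   The unsigned representative of x is its value as an ordinal, (x : nat). *)

Definition signed_val (l : nat) (x : 'Z_(2 ^ l)) : int :=
  (x : nat)%:Z - (((2 ^ l.-1)%N <= (x : nat))%N : nat)%:Z * (2 ^ l)%:Z.

(* arithmetic right shift: floor(signed / 2^s) reduced mod 2^l
   ((m %/ d)%Z is floor division for d > 0) *)
Definition ashr (l : nat) (x : 'Z_(2 ^ l)) (s : nat) : 'Z_(2 ^ l) :=
  ((signed_val x %/ (2 ^ s)%:Z)%Z)%:~R.

Definition corr (l : nat) (a a0 a1 : 'Z_(2 ^ l)) : int :=
  let n' := (2 ^ l.-1)%N in
  if [&& (n' <= a)%N, (a0 < n')%N & (a1 < n')%N] then -1
  else if [&& (a < n')%N, (n' <= a0)%N & (n' <= a1)%N] then 1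
  else 0.

(* Main.v *)
From mathcomp Require Import all_boot all_order all_algebra.
From mathcomp Require Import zify ring.
Import Order.TTheory GRing.Theory Num.Theory.
Local Open Scope ring_scope.
Require Import Defs.

Lemma corr_eq (h x0 x1 x : nat) : (x0 < 2*h)%N -> (x1 < 2*h)%N -> x = ((x0+x1) %% (2*h))%N ->
 (if [&& (h<=x)%N, (x0<h)%N & (x1<h)%N] then -1 else if [&& (x<h)%N, (h<=x0)%N & (h<=x1)%N] then 1 else 0 : int)
  = ((h<=x0)%N : nat)%:Z + ((h<=x1)%N : nat)%:Z - ((h<=x)%N : nat)%:Z - ((2*h <= x0+x1)%N : nat)%:Z.
Proof.
move=> H0 H1 ->.
case: (leqP (2*h) (x0+x1)) => H2.
  have -> : ((x0+x1) %% (2*h) = x0+x1-2*h)%N.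
    by rewrite -{1}(subnK H2) modnDr modn_small; lia.
  case: (leqP h x0) => ?; case: (leqP h x1) => ?;
  case: (leqP h (x0+x1-2*h)) => ? /=; lia.
rewrite modn_small //.
case: (leqP h x0) => ?; case: (leqP h x1) => ?;
  case: (leqP h (x0+x1)) => ? /=; lia.
Qed.

Lemma modsum (N x0 x1 : nat) : (x0 < N)%N -> (x1 < N)%N ->
  (((x0 + x1) %% N)%N)%:Z = x0%:Z + x1%:Z - ((N <= x0 + x1)%N : nat)%:Z * N%:Z.
Proof.
move=> H0 H1; case: (leqP N (x0+x1)) => H2.
  rewrite -{1}(subnK H2) modnDr modn_small; last lia.
  rewrite /= mul1r; lia.
by rewrite modn_small //= mul0r subr0.
Qed.

Lemma divfact (q r d : int) : 0 < d -> 0 <= r < d -> ((q * d + r) %/ d)%Z = q.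
Proof.
move=> dp hr; rewrite divzMDl ?gt_eqF // divz_small ?addr0 //.
case: d dp hr => //= n _; by []. Show.
Qed.

Theorem corollary4p2 (l s : nat) (hl : (1 <= l)%N) (hs : (s < l)%N)
  (a a0 a1 : 'Z_(2 ^ l)) (hsum : a0 + a1 = a)
  (a01 a00 a11 a10 : int)
  (h0 : (a0 : nat)%:Z = a01 * (2 ^ s)%:Z + a00)
  (h1 : (a1 : nat)%:Z = a11 * (2 ^ s)%:Z + a10)
  (h00 : 0 <= a00 < (2 ^ s)%:Z) (h10 : 0 <= a10 < (2 ^ s)%:Z) :
  ashr a0 s + ashr a1 s + (corr a a0 a1 * (2 ^ (l - s))%:Z)%:~R
    + ((2 ^ s)%:Z <= a00 + a10)%R%:R = ashr a s :> 'Z_(2 ^ l).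
Proof.
have Np : (1 < 2^l)%N by rewrite -{1}(expn0 2) ltn_exp2l.
have ltx : forall y : 'Z_(2^l), ((y : nat) < 2^l)%N.
  by move=> y; have := ltn_ord y; move: (nat_of_ord y) => n; rewrite Zp_cast.
have hx : (a : nat) = (((a0 : nat) + a1) %% 2^l)%N by rewrite -hsum /=; move: (nat_of_ord a0) (nat_of_ord a1) => m n; rewrite Zp_cast.
have hh : (2^l = 2 * 2^l.-1)%N by rewrite -expnS prednK.
have Hc : corr a a0 a1 = ((2^l.-1 <= a0)%N : nat)%:Z + ((2^l.-1 <= a1)%N : nat)%:Z
   - ((2^l.-1 <= a)%N : nat)%:Z - ((2^l <= (a0 : nat) + a1)%N : nat)%:Z.
  by rewrite /corr; have := @corr_eq (2^l.-1) a0 a1 a; rewrite -hh; apply.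
have hd : (2^l)%:Z = (2^(l-s))%:Z * (2^s)%:Z by rewrite -PoszM -expnD subnK // ltnW.
have dp : 0 < (2^s)%:Z by rewrite ltz_nat expn_gt0.
have hxz := modsum _ _ _ (ltx a0) (ltx a1); rewrite -hx in hxz.
rewrite /ashr /signed_val.
set d := (2^s)%:Z in h0 h1 h00 h10 hd dp *.
set M := (2^(l-s))%:Z in hd *.
set e := (d <= a00 + a10).
set b0 := ((2^l.-1 <= a0)%N : nat)%:Z in Hc *.
set b1 := ((2^l.-1 <= a1)%N : nat)%:Z in Hc *.
set b := ((2^l.-1 <= a)%N : nat)%:Z in Hc *.
set c := ((2^l <= (a0 : nat) + a1)%N : nat)%:Z in Hc hxz.
have q0 : (((a0 : nat)%:Z - b0 * (2^l)%:Z) %/ d)%Z = a01 - b0 * M.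
  rewrite h0 hd.
  have -> : a01*d + a00 - b0*(M*d) = (a01 - b0*M)*d + a00 by ring.
  exact: divfact.
have q1 : (((a1 : nat)%:Z - b1 * (2^l)%:Z) %/ d)%Z = a11 - b1 * M.
  rewrite h1 hd.
  have -> : a11*d + a10 - b1*(M*d) = (a11 - b1*M)*d + a10 by ring.
  exact: divfact.
set r := a00 + a10 - (e : nat)%:Z * d.
have hr : 0 <= r < d.
  clear -h00 h10 dp; rewrite /r /e; clearbody d; case: lerP => H; rewrite ?mul1r ?mul0r; lia.
have q : (((a : nat)%:Z - b * (2^l)%:Z) %/ d)%Z = a01 + a11 + (e : nat)%:Z - (c + b) * M.
  rewrite hxz h0 h1 hd.
  have -> : a01 * d + a00 + (a11 * d + a10) - c * (M * d) - b * (M * d)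
     = (a01 + a11 + (e : nat)%:Z - (c + b) * M) * d + r by rewrite /r; ring.
  exact: divfact.
rewrite q0 q1 q Hc.
rewrite -[((e : nat)%:R)]/(((e : nat)%:Z)%:~R) -!intrD.
congr (_ %:~R); ring.
Qed.
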